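(* Let $G$ be a finite group and let $A, B\subseteq G$ be subsets such that the multiplication map $A\times B\to G$, $(a,b)\mapsto ab$, is a bijection. Then the order of the subgroup of $G$ generated by $A$ is a multiple of $\mathrm{card}(A)$, and the order of the subgroup of $G$ generated by $B$ is a multiple of $\mathrm{card}(B)$. *)

(* Defs.v *)
From mathcomp Require Import all_boot all_fingroup.
Set Implicit Arguments. Unset Strict Implicit. Unset Printing Implicit Defensive.
Local Open Scope group_scope.

Definition mul_bijective (gT : finGroupType) (A B : {set gT}) : Prop :=
  forall g : gT, exists! p : gT * gT, [/\ p.1 \in A, p.2 \in B & p.1 * p.2 = g].

(* Main.v *)
Require Import Defs.
From mathcomp Require Import all_boot all_fingroup.
Local Open Scope group_scope.

Lemma mb_inj (gT : finGroupType) (A B : {set gT}) (D : {set gT * gT}) :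
  mul_bijective A B -> (forall p, p \in D -> p.1 \in A /\ p.2 \in B) ->
  {in D &, injective (fun p : gT * gT => p.1 * p.2)}.
Proof.
move=> hb hD p q pD qD e.
have [x [_ U]] := hb (p.1 * p.2).
have [pA pB] := hD p pD; have [qA qB] := hD q qD.
have e1 := U p (And3 pA pB erefl).
have e2 := U q (And3 qA qB (esym e)).
by rewrite -e1 -e2.
Qed.

Theorem lemma1p1 (gT : finGroupType) (A B : {set gT}) :
  mul_bijective A B ->
  (#|A| %| #|<<A>>|)%N /\ (#|B| %| #|<<B>>|)%N.
Proof.
move=> hb; split.
- set H := <<A>>.
  have sAH : A \subset H := subset_gen A.
  pose D := setX A (B :&: H).
  have inj : {in D &, injective (fun p : gT * gT => p.1 * p.2)}.
    apply: mb_inj hb _ => p; rewrite inE => /andP[-> ]; rewrite inE => /andP[-> _]; done.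
  have -> : H = [set p.1 * p.2 | p in D] :> {set gT}.
    apply/eqP; rewrite eqEsubset; apply/andP; split.
      apply/subsetP => h hH.
      have [[a b] [[/= aA bB e] _]] := hb h.
      apply/imsetP; exists (a, b) => //.
      rewrite !inE aA bB /=.
      have -> : b = a^-1 * h by rewrite -e mulKg.
      by rewrite groupM ?groupV // (subsetP sAH).
    apply/subsetP => h /imsetP [[a b]]; rewrite !inE /= => /andP[aA /andP[_ bH]] ->.
    by rewrite groupM // (subsetP sAH).
  by rewrite (card_in_imset inj) cardsX dvdn_mulr.
- set H := <<B>>.
  have sBH : B \subset H := subset_gen B.
  pose D := setX (A :&: H) B.
  have inj : {in D &, injective (fun p : gT * gT => p.1 * p.2)}.
    apply: mb_inj hb _ => p; rewrite !inE => /andP[/andP[-> _] ->]; done.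
  have -> : H = [set p.1 * p.2 | p in D] :> {set gT}.
    apply/eqP; rewrite eqEsubset; apply/andP; split.
      apply/subsetP => h hH.
      have [[a b] [[/= aA bB e] _]] := hb h.
      apply/imsetP; exists (a, b) => //.
      rewrite !inE aA bB /= andbT.
      have -> : a = h * b^-1 by rewrite -e mulgK.
      by rewrite groupM ?groupV // (subsetP sBH).
    apply/subsetP => h /imsetP [[a b]]; rewrite !inE /= => /andP[/andP[_ aH] bB] ->.
    by rewrite groupM // (subsetP sBH).
  by rewrite (card_in_imset inj) cardsX dvdn_mull.
Qed.
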